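(* Let $k\ge 2$ be an integer. Let $E_{k+3}(C_3)$ be the Schwarzenberger bundle on $\mathbb{P}^3=\mathbb{P}(S_3)$ defined by the exact sequence $$0\to S_k\otimes\mathcal{O}_{\mathbb{P}(S_3)}(-1)\xrightarrow{M} S_{k+3}\otimes\mathcal{O}_{\mathbb{P}(S_3)}\to E_{k+3}(C_3)\to0,$$ where ${}^tM$ is the $(k+1)\times(k+4)$ matrix whose $i$-th row ($i=0,\dots,k$) has entries $X_0,X_1,X_2,X_3$ in columns $i,i+1,i+2,i+3$ and zeros elsewhere. Let $H\subset\mathbb{P}^3$ be a general plane, let $E_{k+3}(\overline{C_3}):=E_{k+3}(C_3)|_H$ (a Steiner bundle of rank 3 on $H$), and let $\overline{C_3}$ be the image of the twisted cubic $C_3\subset\mathbb{P}^{3\vee}$ under the linear projection from the point $H^\vee$, viewed as a (singular) cubic curve in the dual plane of $H$: it is the set of lines $H'\cap H\subset H$ with $H'^\vee\in C_3$. Then the set of unstable lines of $E_{k+3}(\overline{C_3})$ in $H$ is exactly $\overline{C_3}$, i.e. a line $l\subset H$ satisfies $H^0((E_{k+3}(\overline{C_3})|_l)^\vee)\neq0$ if and only if $l=H'\cap H$ for some plane $H'$ with $H'^\vee\in C_3$.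
   Context: Work over $\mathbb{C}$. $U$ is a 2-dimensional vector space, $S_i=\mathrm{Sym}^iU$, $(X_0,\dots,X_3)$ are coordinates on $\mathbb{P}^3=\mathbb{P}(S_3)$, and $C_3\subset\mathbb{P}^{3\vee}=\mathbb{P}(S_3^\vee)$ is the twisted cubic, image of $\mathbb{P}(S_1^\vee)$ by the Veronese embedding. For a plane $H'\subset\mathbb{P}^3$, $H'^\vee\in\mathbb{P}^{3\vee}$ is its dual point. For general $H$, $H^\vee\notin C_3$. *)

(* Defs.v *)
From HB Require Import structures.
From mathcomp Require Import all_boot all_order all_algebra.
Set Implicit Arguments. Unset Strict Implicit. Unset Printing Implicit Defensive.
Import Order.TTheory GRing.Theory Num.Theory.
Local Open Scope ring_scope.

Section Defs.
Variable F : fieldType.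

(* A point of P^3 = P(S_3) is a
   nonzero row vector x; the plane with dual point h is {x | <h,x> = 0}. *)
Definition pair4 (h x : 'rV[F]_4) : F := \sum_(i < 4) h 0 i * x 0 i.

(* Point (s^3 : s^2 t : s t^2 : t^3) of the twisted cubic C_3 in P^{3v}
   (image of (s:t) in P(S_1^v) by the Veronese map, in the coordinates in which
   the matrix tM below has entries X_0..X_3 with no binomial coefficients). *)
Definition cubic_pt (s t : F) : 'rV[F]_4 := \row_(j < 4) (s ^+ (3 - j) * t ^+ j).

Definition tM (k : nat) (x : 'rV[F]_4) : 'M[F]_(k.+1, k + 4) :=
  \matrix_(i < k.+1, j < k + 4)
    (if (i <= j)%N && (j - i < 4)%N then x 0 (inord (j - i)) else 0).

(* Let l = P(span(a,b)) be a line of P^3 (a, b independent).  Restricting the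
   defining sequence of E_{k+3} to l and dualizing gives
   0 -> (E|_l)^v -> S_{k+3}^v (x) O_l -> S_k^v (x) O_l(1) -> 0, so
   H^0((E|_l)^v) = { v in S_{k+3}^v | tM(x) v = 0 for all x in l }
                 = { v | tM(a) v = 0 and tM(b) v = 0 }.
   A line is unstable iff this space is nonzero. *)
Definition unstable_line (k : nat) (a b : 'rV[F]_4) : Prop :=
  exists v : 'cV[F]_(k + 4), v != 0 /\ tM k a *m v = 0 /\ tM k b *m v = 0.

End Defs.

(* Polynomials in 4 variables (coordinates of the dual point H^v), encoded as
   iterated univariate polynomials, and their evaluation. *)
Definition mpoly4 (F : fieldType) := {poly {poly {poly {poly F}}}}.

Definition eval4 (F : fieldType) (P : mpoly4 F) (h : 'rV[F]_4) : F :=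
  (((P.[(h 0 (inord 3))%:P%:P%:P]).[(h 0 (inord 2))%:P%:P]).[(h 0 (inord 1))%:P]).[h 0 (inord 0)].

(* Main.v *)
Require Import Defs.
From HB Require Import structures.
From mathcomp Require Import all_boot all_order all_algebra.
From mathcomp Require Import zify ring.
Import Order.TTheory GRing.Theory Num.Theory.
Local Open Scope ring_scope.


Section Gen.
Variable F : fieldType.

Definition Lf (n : nat) (w : nat -> F) (p : {poly F}) : F :=
  \sum_(m < n) p`_m * w m.

Lemma LfD n w p q : Lf n w (p + q) = Lf n w p + Lf n w q.
Proof. by rewrite /Lf -big_split; apply: eq_bigr => i _; rewrite coefD mulrDl. Qed.

Lemma LfN n w p : Lf n w (- p) = - Lf n w p.
Proof. by rewrite /Lf -sumrN; apply: eq_bigr => i _; rewrite coefN mulNr. Qed.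

Lemma LfB n w p q : Lf n w (p - q) = Lf n w p - Lf n w q.
Proof. by rewrite LfD LfN. Qed.

Lemma LfZ n w c p : Lf n w (c *: p) = c * Lf n w p.
Proof. by rewrite /Lf mulr_sumr; apply: eq_bigr => i _; rewrite coefZ mulrA. Qed.

Lemma Lfsum n w (I : Type) (r : seq I) (P : pred I) (G : I -> {poly F}) :
  Lf n w (\sum_(i <- r | P i) G i) = \sum_(i <- r | P i) Lf n w (G i).
Proof.
rewrite /Lf (exchange_big). apply: eq_bigr => i _.
by rewrite coef_sum mulr_suml.
Qed.

Lemma poly_expand (q : {poly F}) n : (size q <= n)%N ->
  q = \sum_(i < n) q`_i *: 'X^i.
Proof.
move=> hq; rewrite -poly_def; apply/polyP => i; rewrite coef_poly.
by case: ltnP => // hi; rewrite nth_default // (leq_trans hq hi).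
Qed.

Definition polyx (x : 'rV[F]_4) : {poly F} := \poly_(j < 4) x 0 (inord j).

Lemma Lf_shift k (x : 'rV[F]_4) (v : 'cV[F]_(k + 4)) (i : nat) : (i <= k)%N ->
  Lf (k + 4) (fun m => if (m < k + 4)%N =P true is ReflectT h then v (Ordinal h) 0 else 0)
     ('X^i * polyx x) = (tM k x *m v) (inord i) 0.
Proof.
move=> hi; rewrite /Lf mxE; apply: eq_bigr => j _.
rewrite coefXnM /polyx coef_poly mxE inordK ?ltnS //.
case: eqP => h; last by rewrite ltn_ord in h.
have -> : Ordinal h = j by apply: val_inj.
case: ltnP => hij /=; first by rewrite mul0r.
by case: ltnP => // _; rewrite mul0r.
Qed.


Definition wv k (v : 'cV[F]_(k + 4)) : nat -> F :=
  fun m => if (m < k + 4)%N =P true is ReflectT h then v (Ordinal h) 0 else 0.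

Arguments wv {k}.

Lemma Lf_mulA k (x : 'rV[F]_4) (v : 'cV[F]_(k + 4)) (q : {poly F}) :
  tM k x *m v = 0 -> (size q <= k.+1)%N -> Lf (k + 4) (wv v) (q * polyx x) = 0.
Proof.
move=> hv hq; rewrite (@poly_expand q _ hq) mulr_suml Lfsum.
apply: big1 => i _; rewrite -scalerAl LfZ.
by rewrite (@Lf_shift k x v i) ?hv ?mxE ?mulr0 // -ltnS.
Qed.

Lemma Lf_Xn k (v : 'cV[F]_(k + 4)) (j : 'I_(k + 4)) :
  Lf (k + 4) (wv v) 'X^j = v j 0.
Proof.
rewrite /Lf (bigD1 j) //= coefXn eqxx mul1r big1 ?addr0.
  rewrite /wv; case: eqP => h; last by rewrite ltn_ord in h.
  by congr (v _ 0); apply: val_inj.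
move=> i hij; rewrite coefXn.
by have /negbTE -> : (i : nat) != j by []; rewrite mul0r.
Qed.

End Gen.
Arguments Lf {F}.
Arguments polyx {F}.
Arguments wv {F k}.

Section Closed.
Variable F : closedFieldType.

Lemma core k (w : nat -> F) (A B : {poly F}) : (2 <= k)%N -> size A = 4%N ->
  (size B <= 4)%N ->
  (forall q : {poly F}, (size q <= k.+1)%N -> Lf (k + 4) w (q * A) = 0) ->
  (forall q : {poly F}, (size q <= k.+1)%N -> Lf (k + 4) w (q * B) = 0) ->
  (exists mu, root A mu && root B mu) \/
  (forall p : {poly F}, (size p <= k + 4)%N -> Lf (k + 4) w p = 0).
Proof.
move=> hk hA hB LA LB.
case: (boolP (size (gcdp A B) == 1%N)) => hg; last first.
  have [mu] := closed_rootP (gcdp A B) hg.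
  by rewrite root_gcd => h; left; exists mu.
have /Bezout_eq1_coprimepP [[u1 u2] /= hu] : coprimep A B by [].
right => p hp.
have A0 : A != 0 by rewrite -size_poly_eq0 hA.
rewrite (divp_eq p A) LfD LA ?add0r; last first.
  rewrite size_divp // hA; apply: leq_trans (leq_sub2r _ hp) _; lia.
set R := p %% A.
have hR : (size R <= 3)%N by rewrite -ltnS -hA ltn_modp.
have eR : R = (R * u1 + (R * u2) %/ A * B) * A + ((R * u2) %% A) * B.
  have e1 : R = R * u1 * A + (R * u2) * B.
    by rewrite -mulrA -mulrA -mulrDr hu mulr1.
  rewrite {1}e1 {1}(divp_eq (R * u2) A); ring.
set U := (R * u1 + (R * u2) %/ A * B).
set V := (R * u2) %% A.
have hV : (size V <= 3)%N by rewrite -ltnS -hA ltn_modp.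
have hU : (size U <= 3)%N.
  case: (eqVneq U 0) => [->|U0]; first by rewrite size_poly0.
  have hUA : U * A = R - V * B by rewrite [in RHS]eR addrK.
  have h1 := size_mul U0 A0.
  have h2 := size_polyD R (- (V * B)).
  have h3 := size_polyMleq V B.
  rewrite size_polyN -hUA h1 hA in h2.
  move: h2 h3 hV hB hR.
  set sU := size U; set sR := size R; set sV := size V; set sB := size B.
  set sVB := size (V * B). clearbody sU sR sV sB sVB. lia.
transitivity (Lf (k + 4) w (U * A + V * B)); first by congr Lf; exact: eR.
have hk3 : (3 <= k.+1)%N by lia.
rewrite LfD LA ?add0r; first by apply: LB; exact: leq_trans hV hk3.
exact: leq_trans hU hk3.
Qed.

End Closed.
Section Main.
Variable F : fieldType.

Definition P4 : mpoly4 F :=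
  ('X : {poly F})%:P%:P%:P * ('X : {poly {poly {poly F}}})%:P
  - (('X : {poly {poly F}})%:P%:P) ^+ 2.

Lemma evalP4 (h : 'rV[F]_4) :
  eval4 P4 h = h 0 (inord 0) * h 0 (inord 2) - h 0 (inord 1) ^+ 2.
Proof. by rewrite /eval4 /P4 !hornerE. Qed.

Lemma P4_neq0 : P4 != 0.
Proof.
apply/eqP => P0.
have := evalP4 (\row_(j < 4) ((j : nat) != 1%N)%:R).
rewrite P0 /eval4 !horner0 !mxE !inordK //= => /eqP.
by rewrite expr0n /= subr0 mulr1 eq_sym oner_eq0.
Qed.

Lemma evalP4_cubic (s t : F) : eval4 P4 (cubic_pt s t) = 0.
Proof. rewrite evalP4 !mxE !inordK //=; ring. Qed.

Lemma evalP4Z (l : F) h : eval4 P4 (l *: h) = l ^+ 2 * eval4 P4 h.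
Proof. rewrite !evalP4 !mxE; ring. Qed.

Lemma pair4_lin h (a b : 'rV[F]_4) la mu :
  pair4 h (la *: a + mu *: b) = la * pair4 h a + mu * pair4 h b.
Proof.
rewrite /pair4 !mulr_sumr -big_split; apply: eq_bigr => i _; rewrite !mxE /=; ring.
Qed.

Lemma pair4_cubic1 (mu : F) (x : 'rV[F]_4) : pair4 (cubic_pt 1 mu) x = (polyx x).[mu].
Proof.
rewrite /pair4 /polyx horner_poly; apply: eq_bigr => i _.
by rewrite !mxE expr1n mul1r inord_val mulrC.
Qed.

Lemma pair4_cubic01 (x : 'rV[F]_4) : pair4 (cubic_pt 0 1) x = x 0 (inord 3).
Proof.
rewrite /pair4 !big_ord_recr big_ord0 /= !mxE /=.
have -> : (inord 3 : 'I_4) = ord_max by apply: val_inj; rewrite /= inordK.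
rewrite !expr0n /= !expr1n; ring.
Qed.

Lemma cubic_neq0 (s t : F) : (s, t) != (0, 0) -> cubic_pt s t != 0.
Proof.
move=> hst; apply/negP => /eqP c0.
have e0 : cubic_pt s t 0 0 = 0 by rewrite c0 mxE.
have e3 : cubic_pt s t 0 ord_max = 0 by rewrite c0 mxE.
rewrite !mxE /= expr0 mulr1 in e0; rewrite !mxE /= expr0 mul1r in e3.
move/eqP: e0; rewrite expf_eq0 /= => /eqP s0.
move/eqP: e3; rewrite expf_eq0 /= => /eqP t0.
by rewrite s0 t0 eqxx in hst.
Qed.


Lemma pair4_mx (h x : 'rV[F]_4) : pair4 h x = 0 -> x *m h^T = 0.
Proof.
move=> hx; apply/matrixP => i j; rewrite !ord1 !mxE -[RHS]hx /pair4.
by apply: eq_bigr => l _; rewrite !mxE mulrC.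
Qed.

Lemma pair4_mx' (h x : 'rV[F]_4) : x *m h^T = 0 -> pair4 h x = 0.
Proof.
move/matrixP => /(_ 0 0) e; transitivity ((x *m h^T) 0 0); last by rewrite e mxE.
by rewrite mxE /pair4; apply: eq_bigr => l _; rewrite !mxE mulrC.
Qed.

Lemma rank_hc (h c : 'rV[F]_4) : c != 0 -> eval4 P4 h != 0 -> eval4 P4 c = 0 ->
  \rank (col_mx h c) = 2%N.
Proof.
move=> c0 hP cP.
have h0 : h != 0 by apply/eqP => e; move: hP; rewrite e evalP4 !mxE /= mul0r expr0n subr0 eqxx.
apply/eqP; rewrite eqn_leq rank_leq_row /=.
rewrite ltnNge; apply/negP => hle.
have sub : (h <= col_mx h c)%MS by rewrite -addsmxE addsmxSl.
have := mxrank_leqif_sup sub; rewrite rank_rV h0 => /leqifP.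
case: ifP => [|_ /=]; last by rewrite ltnNge hle.
rewrite col_mx_sub => /andP [_ /submxP [D eD]].
move: cP; rewrite eD [D]mx11_scalar mul_scalar_mx evalP4Z => /eqP.
rewrite mulf_eq0 (negbTE hP) orbF expf_eq0 /= => /eqP D0.
by move: c0; rewrite eD [D]mx11_scalar D0 mul_scalar_mx scale0r eqxx.
Qed.


Lemma span_lemma (h c a b : 'rV[F]_4) : c != 0 -> eval4 P4 h != 0 ->
  eval4 P4 c = 0 -> \rank (col_mx a b) = 2%N ->
  pair4 h a = 0 -> pair4 h b = 0 -> pair4 c a = 0 -> pair4 c b = 0 ->
  forall x, pair4 h x = 0 -> pair4 c x = 0 ->
  exists la mu : F, x = la *: a + mu *: b.
Proof.
move=> c0 hP cP rab ha hb ca cb x hx cx.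
set N := row_mx h^T c^T.
have kerr : \rank (kermx N) = 2%N.
  by rewrite mxrank_ker -mxrank_tr tr_row_mx !trmxK rank_hc.
have inker (y : 'rV[F]_4) : pair4 h y = 0 -> pair4 c y = 0 -> (y <= kermx N)%MS.
  move=> e1 e2; apply/sub_kermxP.
  by rewrite mul_mx_row (@pair4_mx h y e1) (@pair4_mx c y e2) row_mx0.
have sab : (col_mx a b <= kermx N)%MS by rewrite col_mx_sub !inker.
have := mxrank_leqif_sup sab; rewrite rab kerr => /leqifP.
case: ifP => [hk _|_ /=]; last by rewrite ltnn.
have /submxP [D eD] : (x <= col_mx a b)%MS by apply: submx_trans hk; exact: inker.
exists (lsubmx D 0 0), (rsubmx D 0 0).
rewrite eD -{1}[D]hsubmxK mul_row_col.
by rewrite {1}[lsubmx D]mx11_scalar {1}[rsubmx D]mx11_scalar !mul_scalar_mx.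
Qed.


Definition vst (k : nat) (s t : F) : 'cV[F]_(k + 4) :=
  \col_(m < k + 4) (s ^+ (k + 3 - m) * t ^+ m).

Lemma vst_ker k (s t : F) (x : 'rV[F]_4) :
  pair4 (cubic_pt s t) x = 0 -> tM k x *m vst k s t = 0.
Proof.
move=> hx; apply/matrixP => i j0; rewrite !mxE.
pose G j := (if (i <= j)%N && (j - i < 4)%N then x 0 (inord (j - i)) else 0)
   * (s ^+ (k + 3 - j) * t ^+ j).
transitivity (\sum_(j < k + 4) G j).
  by apply: eq_bigr => j _; rewrite !mxE.
have hi : (i <= k)%N by rewrite -ltnS.
rewrite -(big_mkord xpredT G) (big_cat_nat (n := i)) /=; [|lia|lia].
rewrite big_nat_cond big1 ?add0r; last first.
  by move=> j /andP [/andP [_ hj] _]; rewrite /G leqNgt hj mul0r.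
rewrite (big_cat_nat (n := i + 4)) /=; [|lia|lia].
rewrite [X in _ + X]big_nat_cond [X in _ + X]big1 ?addr0; last first.
  move=> j /andP [/andP [hj _] _]; rewrite /G.
  have -> : (j - i < 4)%N = false by apply/negbTE; rewrite -leqNgt; lia.
  by rewrite andbF mul0r.
rewrite -{1}(add0n i) big_addn addKn big_mkord.
transitivity (s ^+ (k - i) * t ^+ i * pair4 (cubic_pt s t) x); last first.
  by rewrite hx mulr0.
rewrite /pair4 mulr_sumr; apply: eq_bigr => l _; rewrite /G.
have hl : (l < 4)%N := ltn_ord l.
rewrite leq_addl addnK hl /= inord_val !mxE.
have -> : (k + 3 - (l + i) = (k - i) + (3 - l))%N by lia.
rewrite !exprD; ring.
Qed.

Lemma vst_neq0 k (s t : F) : (s, t) != (0, 0) -> vst k s t != 0.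
Proof.
move=> hst; apply/negP => /eqP v0.
have l0 : (0 < k + 4)%N by rewrite addn4.
have l3 : (k + 3 < k + 4)%N by rewrite ltn_add2l.
have e0 : vst k s t (Ordinal l0) 0 = 0 by rewrite v0 mxE.
have e3 : vst k s t (Ordinal l3) 0 = 0 by rewrite v0 mxE.
rewrite !mxE /= expr0 mulr1 in e0; rewrite !mxE /= in e3.
move/eqP: e0; rewrite expf_eq0 addn3 /= => /eqP s0.
move: e3; rewrite subnn expr0 mul1r => /eqP; rewrite expf_eq0 addn3 /= => /eqP t0.
by rewrite s0 t0 eqxx in hst.
Qed.

End Main.

Section Fwd.
Variable F : closedFieldType.

Lemma fwd k (a b : 'rV[F]_4) : (2 <= k)%N -> unstable_line k a b ->
  exists s t : F, (s, t) != (0, 0) /\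
     pair4 (cubic_pt s t) a = 0 /\ pair4 (cubic_pt s t) b = 0.
Proof.
move=> hk [v [v0 [ha hb]]].
have key (A B : 'rV[F]_4) : A 0 (inord 3) != 0 -> tM k A *m v = 0 ->
    tM k B *m v = 0 ->
    exists mu, pair4 (cubic_pt 1 mu) A = 0 /\ pair4 (cubic_pt 1 mu) B = 0.
  move=> A3 hA hB.
  have sA : size (polyx A) = 4%N by rewrite /polyx size_poly_eq.
  have sB : (size (polyx B) <= 4)%N by rewrite /polyx size_poly.
  case: (@core F k (wv v) (polyx A) (polyx B) hk sA sB
     (fun q hq => @Lf_mulA F k A v q hA hq) (fun q hq => @Lf_mulA F k B v q hB hq)).
    move=> [mu /andP [r1 r2]]; exists mu.
    by rewrite !pair4_cubic1; split; apply/eqP.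
  move=> hall; exfalso; move/negP: v0; apply; apply/eqP/matrixP => j j0.
  rewrite ord1 mxE -Lf_Xn; apply: hall.
  by rewrite size_polyXn.
case: (eqVneq (a 0 (inord 3)) 0) => a3.
  case: (eqVneq (b 0 (inord 3)) 0) => b3.
    exists 0, 1; split; first by rewrite xpair_eqE oner_eq0 andbF.
    by rewrite !pair4_cubic01.
  have [mu [e1 e2]] := key b a b3 hb ha.
  by exists 1, mu; split; [rewrite xpair_eqE oner_eq0 | split].
have [mu [e1 e2]] := key a b a3 ha hb.
by exists 1, mu; split; [rewrite xpair_eqE oner_eq0 | split].
Qed.

End Fwd.

Theorem proposition5p7 (F : closedFieldType) (F_char0 : [pchar F] =i pred0)
    (k : nat) (hk : (2 <= k)%N) :
  exists P : mpoly4 F, P != 0 /\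
  forall h : 'rV[F]_4, h != 0 -> eval4 P h != 0 ->
  forall a b : 'rV[F]_4,
    \rank (col_mx a b) = 2%N -> pair4 h a = 0 -> pair4 h b = 0 ->
    (unstable_line k a b <->
     exists s t : F, (s, t) != (0, 0) /\
       (forall x : 'rV[F]_4,
          (pair4 h x = 0 /\ pair4 (cubic_pt s t) x = 0) <->
          exists la mu : F, x = la *: a + mu *: b)).
Proof.
exists (P4 F); split; first exact: P4_neq0.
move=> h h0 hP a b rab ha hb; split.
  move=> hu; have [s [t [st [ca cb]]]] := @fwd F k a b hk hu.
  exists s, t; split => // x; split.
    move=> [hx cx].
    exact: (@span_lemma F h (cubic_pt s t) a b (@cubic_neq0 F s t st) hP (@evalP4_cubic F s t) rab ha hb ca cb x hx cx).
  by move=> [la [mu ->]]; rewrite !(@pair4_lin F) ha hb ca cb !mulr0 addr0.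
move=> [s [t [st hiff]]].
have [_ ca] : pair4 h a = 0 /\ pair4 (cubic_pt s t) a = 0.
  by apply/hiff; exists 1, 0; rewrite scale1r scale0r addr0.
have [_ cb] : pair4 h b = 0 /\ pair4 (cubic_pt s t) b = 0.
  by apply/hiff; exists 0, 1; rewrite scale1r scale0r add0r.
exists (@vst F k s t); split; first exact: (@vst_neq0 F k s t st).
by split; apply: (@vst_ker F k s t).
Qed.
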